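(* Let $n\ge 3$ and $1\le k<\frac{n}{2}$ be integers. The co-spectrum of the generalized Petersen graph $P(n,k)$ is exactly $\{3,4,5,\dots,n+2\}$; that is, for every integer $s$ with $3\le s\le n+2$, $P(n,k)$ has a bond of size exactly $s$, and every bond of $P(n,k)$ has size in $\{3,\dots,n+2\}$.
   Context: The generalized Petersen graph $P(n,k)$, for $n\ge 3$ and $1\le k<\frac n2$, has vertex set $\{x_1,\dots,x_n,y_1,\dots,y_n\}$ and edge set $\{x_ix_{i+1},\ x_iy_i,\ y_iy_{i+k} : i=1,\dots,n\}$, with subscripts read modulo $n$. A bond of a graph is a minimal nonempty edge-cut; equivalently, for a connected graph $G$, it is the set of edges $[X,Y]$ between the parts of a partition $V(G)=X\cup Y$ ($X,Y$ nonempty) such that $G[X]$ and $G[Y]$ are both connected. The co-spectrum of a graph is the set of all sizes of its bonds. *)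

(* Defs.v *)
From mathcomp Require Import all_boot.
Unset Printing Implicit Defensive.

(* Vertices of P(n,k): (false, i) is x_i and (true, i) is y_i, for i : 'I_n
   (indices 0..n-1 instead of 1..n; subscripts read modulo n). *)
Definition gp_vertex (n : nat) : finType := (bool * 'I_n)%type.

Definition gp_adj (n k : nat) (u v : gp_vertex n) : bool :=
  match u, v with
  | (false, i), (false, j) => (val j == (val i + 1) %% n) || (val i == (val j + 1) %% n)
  | (true, i), (true, j) => (val j == (val i + k) %% n) || (val i == (val j + k) %% n)
  | (false, i), (true, j) => i == j
  | (true, i), (false, j) => i == j
  end.

Definition gp_edges (n k : nat) : {set {set gp_vertex n}} :=
  [set e : {set gp_vertex n} |
     [exists u : gp_vertex n, exists v : gp_vertex n,
        gp_adj n k u v && (e == [set u; v])]].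

Definition edge_cut (n k : nat) (X : {set gp_vertex n}) : {set {set gp_vertex n}} :=
  [set e in gp_edges n k | (e :&: X != set0) && (e :\: X != set0)].

Definition induced_connected (n k : nat) (X : {set gp_vertex n}) : Prop :=
  forall u v, u \in X -> v \in X ->
    connect [rel a b | gp_adj n k a b && (a \in X) && (b \in X)] u v.

Definition is_bond (n k : nat) (F : {set {set gp_vertex n}}) : Prop :=
  exists X : {set gp_vertex n},
    [/\ X != set0, ~: X != set0, induced_connected n k X,
        induced_connected n k (~: X) & F = edge_cut n k X].

Definition cospectrum (n k : nat) : nat -> Prop :=
  fun s => exists F, is_bond n k F /\ #|F| = s.

(* Main.v *)
Require Import Defs.
From mathcomp Require Import all_boot zify.
Set Implicit Arguments. Unset Strict Implicit. Unset Printing Implicit Defensive.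

Lemma ord_pos n (i : 'I_n) : 0 < n.
Proof. by apply: leq_ltn_trans (ltn_ord i). Qed.

Definition sh n (m : nat) (i : 'I_n) : 'I_n := Ordinal (ltn_pmod (i + m) (ord_pos i)).

Lemma shE n m (i : 'I_n) : val (sh m i) = (i + m) %% n.
Proof. by []. Qed.

Lemma mod2 x n : x < n.*2 -> x %% n = if x < n then x else x - n.
Proof.
move=> h; case: ltnP => hx; first by rewrite modn_small.
have -> : x = (x - n) + n by rewrite subnK.
rewrite modnDr modn_small ?addnK //; lia.
Qed.

Lemma sh_inj n m : injective (@sh n m).
Proof.
move=> i j /(congr1 val); rewrite !shE => /eqP; rewrite eqn_modDr.
rewrite !modn_small // => /eqP h; exact: val_inj.
Qed.

Lemma shsh n a b (i : 'I_n) : sh a (sh b i) = sh (b + a) i.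
Proof. apply: val_inj; by rewrite !shE modnDml addnA. Qed.

Lemma sh_neq n m (i : 'I_n) : 0 < m < n -> sh m i != i.
Proof.
move=> /andP [h1 h2]; apply/eqP => /(congr1 val); rewrite shE mod2; last first.
  have := ltn_ord i; lia.
case: ifP => ? /= ?; lia.
Qed.

Lemma sh_sum n m (F : 'I_n -> nat) : \sum_i F (sh m i) = \sum_i F i.
Proof. by rewrite [RHS](reindex_inj (@sh_inj n m)). Qed.

Definition Ea n (p : 'I_3 * 'I_n) : gp_vertex n :=
  match val p.1 with 0 | 1 => (false, p.2) | _ => (true, p.2) end.
Definition Eb n k (p : 'I_3 * 'I_n) : gp_vertex n :=
  match val p.1 with 0 => (false, sh 1 p.2) | 1 => (true, p.2) | _ => (true, sh k p.2) end.
Definition Eo n k (p : 'I_3 * 'I_n) : {set gp_vertex n} := [set Ea p; Eb k p].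

Lemma adj_sym n k : symmetric (gp_adj n k).
Proof. by move=> [[] i] [[] j] //=; rewrite orbC // eq_sym. Qed.

Lemma adjE n k (i j : 'I_n) :
  [/\ gp_adj n k (false, i) (false, j) = (j == sh 1 i) || (i == sh 1 j),
      gp_adj n k (true, i) (true, j) = (j == sh k i) || (i == sh k j),
      gp_adj n k (false, i) (true, j) = (i == j) &
      gp_adj n k (true, i) (false, j) = (i == j)].
Proof. by rewrite /gp_adj -!val_eqE. Qed.

Lemma Eab_adj n k p : gp_adj n k (Ea p) (Eb k p).
Proof.
by case: p => [[[|[|[|m]]] ht] i] //=; rewrite /= eqxx.
Qed.

Lemma Eab_neq n k (p : 'I_3 * 'I_n) : 0 < k < n -> 1 < n -> Ea p != Eb k p.
Proof.
move=> hk h1; case: p => [[[|[|[|m]]] ht] i] //=; rewrite xpair_eqE /= eq_sym ?sh_neq //.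
Qed.

Lemma E_surj n k u v : gp_adj n k u v -> exists p, Eo k p = [set u; v].
Proof.
case: u v => [[] i] [[] j]; case: (adjE k i j) => h1 h2 h3 h4; rewrite ?h1 ?h2 ?h3 ?h4.
- case/orP=> /eqP ->.
  + by exists (Ordinal (isT : 2 < 3), i).
  + by exists (Ordinal (isT : 2 < 3), j); rewrite /Eo setUC.
- move=> /eqP ->; by exists (Ordinal (isT : 1 < 3), j); rewrite /Eo setUC.
- move=> /eqP ->; by exists (Ordinal (isT : 1 < 3), j).
- case/orP=> /eqP ->.
  + by exists (Ordinal (isT : 0 < 3), i).
  + by exists (Ordinal (isT : 0 < 3), j); rewrite /Eo setUC.
Qed.

Lemma set2_inv (T : finType) (a b c d : T) : a != b -> [set a; b] = [set c; d] ->
  (a = c /\ b = d) \/ (a = d /\ b = c).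
Proof.
move=> ab e.
have ha : a \in [set c; d] by rewrite -e set21.
have hb : b \in [set c; d] by rewrite -e set22.
move: ha hb; rewrite !inE => /orP [] /eqP ha /orP [] /eqP hb; subst.
- by rewrite eqxx in ab.
- by left.
- by right.
- by rewrite eqxx in ab.
Qed.

Lemma Eo_inj n k : 0 < k -> k.*2 < n -> 2 < n -> injective (@Eo n k).
Proof.
move=> hk h2k h3 p q e.
have hkn : 0 < k < n by apply/andP; split => //; lia.
have h1 : 1 < n by lia.
have := set2_inv (Eab_neq p hkn h1) e.
case: p e => [[[|[|[|m]]] ht] i] //=; case: q => [[[|[|[|m']]] ht'] j] //= e;
  rewrite /Ea /Eb /= => -[[/pair_equal_spec [_ h] /pair_equal_spec [_ h']]|
                         [/pair_equal_spec [_ h] /pair_equal_spec [_ h']]] //;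
  try (subst; congr pair; exact: val_inj).
- have e2 : sh 2 i = i by rewrite -[2]/(1+1) -shsh h' -h.
  suff : sh 2 i != i by rewrite e2 eqxx.
  apply: sh_neq; lia.
- have e2 : sh (k + k) i = i by rewrite -shsh h' -h.
  suff : sh (k + k) i != i by rewrite e2 eqxx.
  apply: sh_neq; lia.
Qed.

Lemma gp_edgesE n k : gp_edges n k = Eo k @: setT.
Proof.
apply/setP => e; rewrite inE; apply/existsP/imsetP.
- case=> u /existsP [v /andP [h /eqP ->]].
  by have [p hp] := E_surj h; exists p.
- case=> p _ ->; exists (Ea p); apply/existsP; exists (Eb k p).
  by rewrite Eab_adj eqxx.
Qed.

Lemma s2I (T : finType) (a b : T) X : ([set a; b] :&: X != set0) = (a \in X) || (b \in X).
Proof.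
apply/set0Pn/orP => [[x]|[h|h]].
- by rewrite !inE => /andP [/orP [] /eqP -> ->]; auto.
- by exists a; rewrite !inE eqxx h.
- by exists b; rewrite !inE eqxx orbT h.
Qed.

Lemma s2D (T : finType) (a b : T) X : ([set a; b] :\: X != set0) = (a \notin X) || (b \notin X).
Proof.
apply/set0Pn/orP => [[x]|[h|h]].
- by rewrite !inE => /andP [h /orP [] /eqP e]; subst; auto.
- by exists a; rewrite !inE eqxx h.
- by exists b; rewrite !inE eqxx orbT h.
Qed.

Definition crs n k (X : {set gp_vertex n}) (p : 'I_3 * 'I_n) := (Ea p \in X) != (Eb k p \in X).

Lemma cut_card n k (X : {set gp_vertex n}) : 0 < k -> k.*2 < n -> 2 < n ->
  #|edge_cut n k X| = #|[set p | crs k X p]|.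
Proof.
move=> h1 h2 h3; rewrite -(card_imset _ (Eo_inj h1 h2 h3)).
suff -> : edge_cut n k X = Eo k @: [set p | crs k X p] by [].
apply/setP => e; rewrite /edge_cut gp_edgesE inE.
apply/andP/imsetP.
- case=> /imsetP [p _ ->]; rewrite /Eo s2I s2D => h; exists p => //.
  by rewrite inE /crs; move: h; case: (Ea p \in X); case: (Eb k p \in X).
- case=> p; rewrite inE /crs => h ->; split; first by apply: imset_f.
  by rewrite /Eo s2I s2D; move: h; case: (Ea p \in X); case: (Eb k p \in X).
Qed.

Lemma card_sumb (T : finType) (P : pred T) : #|[set p | P p]| = \sum_p (P p : nat).
Proof.
rewrite -sum1_card big_mkcond /=; apply: eq_bigr => p _; rewrite inE; by case: (P p).
Qed.

Lemma sum3 n (F : 'I_3 * 'I_n -> nat) :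
  \sum_p F p = \sum_i (F (Ordinal (isT : 0 < 3), i) + F (Ordinal (isT : 1 < 3), i)
                       + F (Ordinal (isT : 2 < 3), i)).
Proof.
rewrite (eq_bigr (fun p => F (p.1, p.2))); last by case.
rewrite -(pair_bigA _ (fun t i => F (t, i))) /=.
rewrite big_ord_recl big_ord_recl big_ord_recl big_ord0 addn0 addnA -!big_split /=.
apply: eq_bigr => i _; congr (F (_, _) + F (_, _) + F (_, _)); exact: val_inj.
Qed.

Definition fX n (X : {set gp_vertex n}) (i : 'I_n) := (false, i) \in X.
Definition gX n (X : {set gp_vertex n}) (i : 'I_n) := (true, i) \in X.

Definition sA n (f : 'I_n -> bool) m := \sum_i (f i != f (sh m i) : nat).
Definition sB n (f g : 'I_n -> bool) := \sum_i (f i != g i : nat).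

Lemma cut_formula n k (X : {set gp_vertex n}) : 0 < k -> k.*2 < n -> 2 < n ->
  #|edge_cut n k X| = sA (fX X) 1 + sB (fX X) (gX X) + sA (gX X) k.
Proof.
move=> h1 h2 h3; rewrite cut_card // card_sumb sum3 -!big_split /=.
by apply: eq_bigr => i _; rewrite /crs /Ea /Eb /=.
Qed.

Lemma cardX n (X : {set gp_vertex n}) : #|X| = \sum_i (fX X i : nat) + \sum_i (gX X i : nat).
Proof.
rewrite -sum1_card big_mkcond /=.
rewrite (eq_bigr (fun p => if (p.1, p.2) \in X then 1 else 0)); last by case.
rewrite -(pair_bigA _ (fun b i => if (b, i) \in X then 1 else 0)) /=.
rewrite big_bool /= addnC; congr (_ + _); apply: eq_bigr => i _; rewrite /fX /gX;
  by case: (_ \in X).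
Qed.

Definition eX n k (X : {set gp_vertex n}) := #|[set p | Eo k p \subset X]|.

Lemma edge_count n k (X : {set gp_vertex n}) : 0 < k -> k.*2 < n -> 2 < n ->
  3 * #|X| = (eX k X).*2 + #|edge_cut n k X|.
Proof.
move=> h1 h2 h3; rewrite cut_card // /eX !card_sumb -mul2n big_distrr -big_split /=.
have -> : \sum_p (2 * (Eo k p \subset X) + crs k X p) =
          \sum_p ((Ea p \in X) + (Eb k p \in X) : nat).
  apply: eq_bigr => p _; rewrite /Eo subUset !sub1set /crs.
  by case: (Ea p \in X); case: (Eb k p \in X).
rewrite sum3 !big_split /= cardX mulnDr.
rewrite /Ea /Eb /=.
have e1 := @sh_sum n 1 (fun i => (fX X i : nat)).
have e2 := @sh_sum n k (fun i => (gX X i : nat)).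
rewrite /fX /gX /= in e1 e2 *; rewrite e1 e2; lia.
Qed.

Lemma tree_bound (T I : finType) (e : rel T) (E : I -> {set T}) (X : {set T}) r :
  r \in X ->
  (forall v, v \in X -> connect [rel a b | e a b && (a \in X) && (b \in X)] r v) ->
  (forall u v, e u v -> exists p, E p = [set u; v]) ->
  #|X| <= #|[set p | E p \subset X]| + 1.
Proof.
move=> rX hc hE.
set er := [rel a b | e a b && (a \in X) && (b \in X)] in hc.
pose R := fix R m := if m is m'.+1 then R m' :|: [set v | [exists u in R m', er u v]]
                      else [set r].
have Rpath : forall p x m, x \in R m -> path er x p -> last x p \in R (m + size p).
  elim=> [|y p IH] x m hx /=; first by rewrite addn0.
  case/andP => hxy hp; rewrite addnS -addSn; apply: IH hp.
  rewrite /= inE; apply/orP; right; rewrite inE; apply/existsP; exists x.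
  by rewrite hx.
have dex : forall v, exists m, (v \in R m) || (v \notin X).
  move=> v; case vX: (v \in X); last by exists 0; rewrite orbT.
  have /connectP [p hp ->] := hc v vX.
  by exists (0 + size p); rewrite (Rpath p r 0) // inE.
pose d v := ex_minn (dex v).
have dP : forall v, v \in X -> v \in R (d v) /\ forall m, v \in R m -> d v <= m.
  move=> v vX; rewrite /d; case: ex_minnP => m; rewrite vX orbF => h1 h2.
  by split => // m' hm'; apply: h2; rewrite hm'.
have hpar : forall v, v \in X :\ r -> exists u, [/\ u \in X, e u v & d u < d v].
  move=> v; rewrite !inE => /andP [vr vX].
  have [h1 h2] := dP v vX.
  move: h1 h2; case: (d v) => [|m] h1 h2.
    by move: h1; rewrite inE (negbTE vr).
  move: h1; rewrite /= inE => /orP [h|].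
    by have := h2 _ h; rewrite ltnn.
  rewrite inE => /existsP [u /andP [uR /andP [/andP [euv uX] _]]].
  exists u; split => //; rewrite ltnS; exact: (proj2 (dP u uX)).
case: (boolP (X :\ r == set0)) => [/eqP h0 | /set0Pn [v0 hv0]].
  by rewrite (cardsD1 r X) rX h0 cards0 add1n addnC ltnS leq0n.
have hq : forall v, v \in X :\ r -> exists p, exists u, (E p == [set u; v]) && (u \in X) && (d u < d v).
  move=> v hv; have [u [uX euv duv]] := hpar v hv.
  have [p hp] := hE u v euv; exists p, u; by rewrite hp eqxx uX duv.
have [p0 _] := hq v0 hv0.
pose q v := odflt p0 [pick p | [exists u, (E p == [set u; v]) && (u \in X) && (d u < d v)]].
have qP : forall v, v \in X :\ r -> exists u, [/\ E (q v) = [set u; v], u \in X & d u < d v].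
  move=> v hv; rewrite /q; case: pickP => [p /existsP [u /andP [/andP [/eqP h1 h2] h3]]|h].
    by exists u.
  have [p [u hp]] := hq v hv; by have := h p; rewrite /= (_ : [exists u, _] = true) //;
    apply/existsP; exists u.
have qinj : {in X :\ r &, injective q}.
  move=> v v' hv hv' eq.
  have [u [e1 uX du]] := qP v hv; have [u' [e2 uX' du']] := qP v' hv'.
  have vin : v \in [set u'; v'] by rewrite -e2 -eq e1 set22.
  have vin' : v' \in [set u; v] by rewrite -e1 eq e2 set22.
  move: vin vin'; rewrite !inE => /orP [/eqP h|/eqP //] /orP [/eqP h'|/eqP //].
  subst; lia.
rewrite (cardsD1 r X) rX add1n addnC ltnS -(card_in_imset qinj).
apply: subset_leq_card; apply/subsetP => p /imsetP [v hv ->]; rewrite inE.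
have [u [e1 uX _]] := qP v hv; rewrite e1 subUset !sub1set uX.
by move: hv; rewrite !inE => /andP [].
Qed.

Lemma closed3 n k (S : {set 'I_n}) j : 0 < k -> k.*2 < n -> j \in S ->
  (forall i, i \in S -> sh k i \in S) -> 3 <= #|S|.
Proof.
move=> h1 h2 jS cl.
have n1 : sh k j != j by apply: sh_neq; lia.
have n2 : sh k (sh k j) != j by rewrite shsh; apply: sh_neq; lia.
have n3 : sh k (sh k j) != sh k j by apply: contra n1 => /eqP /sh_inj ->.
have -> : 3 = #|sh k (sh k j) |: [set j; sh k j]|.
  rewrite cardsU1 cards2 !inE (negbTE n3) (negbTE n2) eq_sym n1 /=; by [].
apply: subset_leq_card; apply/subsetP => x; rewrite !inE => /or3P [] /eqP ->;
  [exact: cl (cl _ jS) | by [] | exact: cl _ jS].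
Qed.

Lemma sA_card n (f : 'I_n -> bool) m : sA f m = #|[set i | f i != f (sh m i)]|.
Proof. by rewrite (@card_sumb _ (fun i => f i != f (sh m i))). Qed.
Lemma sB_card n (f g : 'I_n -> bool) : sB f g = #|[set i | f i != g i]|.
Proof. by rewrite (@card_sumb _ (fun i => f i != g i)). Qed.

Lemma sA_even n (f : 'I_n -> bool) m : ~~ odd (sA f m).
Proof.
have : sA f m + (\sum_i (f i && f (sh m i) : nat)).*2 = (\sum_i (f i : nat)).*2.
  rewrite -!addnn {2}(_ : \sum_i (f i : nat) = \sum_i (f (sh m i) : nat)); last by rewrite (@sh_sum n m (fun i => (f i : nat))).
  rewrite /sA -!big_split /=.
  by apply: eq_bigr => i _; case: (f i); case: (f (sh m i)).
move/(congr1 odd); rewrite oddD !odd_double addbF => ->; by [].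
Qed.

Lemma ge1_even x : ~~ odd x -> 0 < x -> 2 <= x.
Proof. by case: x => [|[|x]]. Qed.

Lemma f_const n (f : 'I_n -> bool) (i0 : 'I_n) : (forall j, f j = f (sh 1 j)) ->
  forall i, f i = f i0.
Proof.
move=> h.
have key : forall m (hm : m < n), f (Ordinal hm) = f (Ordinal (ord_pos i0)).
  elim=> [|m IH] hm; first by congr f; apply: val_inj.
  have hm' : m < n by lia.
  rewrite -(IH hm') [RHS]h; congr f; apply: val_inj; rewrite shE /= modn_small ?addn1 //.
move=> i; have := key _ (ltn_ord i); have := key _ (ltn_ord i0).
rewrite (_ : Ordinal (ltn_ord i) = i); last exact: val_inj.
rewrite (_ : Ordinal (ltn_ord i0) = i0); last exact: val_inj.
by move=> -> ->.
Qed.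

Lemma lower n k (f g : 'I_n -> bool) : 0 < k -> k.*2 < n -> 2 < n ->
  (forall b, exists i, (f i != b) || (g i != b)) -> 3 <= sA f 1 + sB f g + sA g k.
Proof.
move=> h1 h2 h3 hb.
have eA := sA_even f 1; have eC := sA_even g k.
case: (pickP (fun j => f j != f (sh 1 j))) => [j hj|hno].
  have A1 : 0 < sA f 1 by rewrite sA_card card_gt0; apply/set0Pn; exists j; rewrite inE.
  have A2 := ge1_even eA A1.
  case: (posnP (sB f g)) => [B0|]; last by lia.
  have fg : forall i, f i = g i.
    move=> i; move: B0; rewrite sB_card => /eqP; rewrite cards_eq0 => /eqP /setP /(_ i).
    by rewrite !inE => /negbFE /eqP.
  case: (posnP (sA g k)) => [C0|]; last by move=> C1; have := ge1_even eC C1; lia.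
  have gk : forall i, g i = g (sh k i).
    move=> i; move: C0; rewrite sA_card => /eqP; rewrite cards_eq0 => /eqP /setP /(_ i).
    by rewrite !inE => /negbFE /eqP.
  suff : 3 <= sA f 1 by lia.
  rewrite sA_card; apply: (closed3 (k := k) (j := j)) => //; first by rewrite inE.
  move=> i; rewrite !inE shsh addnC -shsh !fg -!gk //.
have hf : forall j, f j = f (sh 1 j) by move=> j; have := hno j => /= /negbFE /eqP.
have [i0 _] := hb true.
have fc := f_const i0 hf; set b := f i0 in fc.
have [i1 hi1] := hb b; rewrite fc eqxx /= in hi1.
have eB : sB f g = #|[set i | g i != b]|.
  by rewrite sB_card; congr #|pred_of_set _|; apply/setP => i; rewrite !inE fc eq_sym.
have B1 : 0 < sB f g by rewrite eB card_gt0; apply/set0Pn; exists i1; rewrite inE.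
case: (posnP (sA g k)) => [C0|]; last by move=> C1; have := ge1_even eC C1; lia.
have gk : forall i, g i = g (sh k i).
  move=> i; move: C0; rewrite sA_card => /eqP; rewrite cards_eq0 => /eqP /setP /(_ i).
  by rewrite !inE => /negbFE /eqP.
suff : 3 <= sB f g by lia.
rewrite eB; apply: (closed3 (k := k) (j := i1)) => //; first by rewrite inE.
by move=> i; rewrite !inE -gk.
Qed.

Lemma sum_range (F : nat -> nat) lo hi c : lo <= hi ->
  (forall i, lo <= i < hi -> F i = c) -> \sum_(lo <= i < hi) F i = (hi - lo) * c.
Proof.
move=> _ h; rewrite -sum_nat_const_nat; apply: eq_big_nat => i hi'; exact: h.
Qed.

Ltac btac := repeat (match goal with
  | |- context [if _ then _ else _] => let h := fresh in case: ifP => h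
  | |- context [?a < ?b] => let h := fresh in case: (ltnP a b) => h
  | |- context [?a <= ?b] => let h := fresh in case: (leqP a b) => h
  end); simpl; try lia.

Lemma sumA n t : 0 < t < n -> \sum_(0 <= i < n) ((i < t) != ((i + 1) %% n < t) : nat) = 2.
Proof.
move=> ht.
pose F i := ((i < t) != ((i + 1) %% n < t) : nat); change (\sum_(0 <= i < n) F i = 2).
rewrite (@big_cat_nat _ _ _ (t - 1) 0 n) /=; try lia.
rewrite (@big_cat_nat _ _ _ t (t - 1) n) /=; try lia.
rewrite (@big_cat_nat _ _ _ (n - 1) t n) /=; try lia.
rewrite (@sum_range F 0 (t - 1) 0) ?(@sum_range F (t-1) t 1) ?(@sum_range F t (n-1) 0)
  ?(@sum_range F (n-1) n 1); try lia;
  move=> i hi; rewrite /F mod2; try lia; btac.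
Qed.

Lemma sumB n t a : a <= t <= n -> \sum_(0 <= i < n) ((i < t) != (i < a) : nat) = t - a.
Proof.
move=> ht.
pose F i := ((i < t) != (i < a) : nat); change (\sum_(0 <= i < n) F i = t - a).
rewrite (@big_cat_nat _ _ _ a 0 n) /=; try lia.
rewrite (@big_cat_nat _ _ _ t a n) /=; try lia.
rewrite (@sum_range F 0 a 0) ?(@sum_range F a t 1) ?(@sum_range F t n 0); try lia;
  move=> i hi; rewrite /F; btac.
Qed.

Lemma sumC n k a : a <= k -> k.*2 < n ->
  \sum_(0 <= i < n) ((i < a) != ((i + k) %% n < a) : nat) = a.*2.
Proof.
move=> ha hk.
pose F i := ((i < a) != ((i + k) %% n < a) : nat); change (\sum_(0 <= i < n) F i = a.*2).
rewrite (@big_cat_nat _ _ _ a 0 n) /=; try lia.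
rewrite (@big_cat_nat _ _ _ (n - k) a n) /=; try lia.
rewrite (@big_cat_nat _ _ _ (n - k + a) (n - k) n) /=; try lia.
rewrite (@sum_range F 0 a 1) ?(@sum_range F a (n - k) 0) ?(@sum_range F (n-k) (n - k + a) 1)
  ?(@sum_range F (n - k + a) n 0); try lia;
  move=> i hi; rewrite /F mod2; try lia; btac.
Qed.

Lemma cutC n k (X : {set gp_vertex n}) : edge_cut n k (~: X) = edge_cut n k X.
Proof.
apply/setP => e; rewrite !inE; congr (_ && _).
by rewrite !setDE setCK andbC.
Qed.

Lemma upper1 n k (X : {set gp_vertex n}) : 0 < k -> k.*2 < n -> 2 < n ->
  X != set0 -> induced_connected n k X -> #|edge_cut n k X| <= #|X| + 2.
Proof.
move=> h1 h2 h3 /set0Pn [r rX] hc.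
have := @edge_count n k X h1 h2 h3.
have := @tree_bound _ _ (gp_adj n k) (Eo k) X r rX (fun v vX => hc r v rX vX) (@E_surj n k).
rewrite /eX; lia.
Qed.

Lemma card_V n : #|gp_vertex n| = n.*2.
Proof. by rewrite card_prod card_bool card_ord mul2n. Qed.

Lemma bond_sizes n k (X : {set gp_vertex n}) : 0 < k -> k.*2 < n -> 2 < n ->
  X != set0 -> ~: X != set0 -> induced_connected n k X -> induced_connected n k (~: X) ->
  3 <= #|edge_cut n k X| <= n + 2.
Proof.
move=> h1 h2 h3 hX hY cX cY; apply/andP; split.
  rewrite cut_formula //; apply: lower => // b.
  move: hX hY => /set0Pn [u uX] /set0Pn [v vY].
  case: b.
    case: v vY => [[] i]; rewrite inE => vY; exists i; rewrite /fX /gX (negbTE vY) //.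
    by rewrite orbT.
  case: u uX => [[] i] uX; exists i; rewrite /fX /gX uX //; by rewrite orbT.
have u1 := upper1 h1 h2 h3 hX cX.
have u2 := upper1 h1 h2 h3 hY cY.
rewrite cutC in u2.
have := cardsC X; rewrite card_V; lia.
Qed.

Definition Xta n t a : {set gp_vertex n} := [set v | if v.1 then val v.2 < a else val v.2 < t].

Lemma ordsum n (G : nat -> nat) : \sum_(i < n) G (val i) = \sum_(0 <= i < n) G i.
Proof. by rewrite big_mkord. Qed.

Lemma Xta_cut n k t a : 0 < k -> k.*2 < n -> 2 < n -> 0 < t -> t + k <= n -> a <= k -> a <= t ->
  #|edge_cut n k (Xta n t a)| = t + a + 2.
Proof.
move=> h1 h2 h3 ht htk ha hat; rewrite cut_formula //.
rewrite /sA /sB.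
rewrite [X in X + _ + _](eq_bigr (fun i : 'I_n => ((i < t) != ((i + 1) %% n < t) : nat)));
  last by move=> i _; rewrite /fX /Xta !inE.
rewrite [X in _ + X + _](eq_bigr (fun i : 'I_n => ((i < t) != (i < a) : nat)));
  last by move=> i _; rewrite /fX /gX /Xta !inE.
rewrite [X in _ + X](eq_bigr (fun i : 'I_n => ((i < a) != ((i + k) %% n < a) : nat)));
  last by move=> i _; rewrite /gX /Xta !inE.
rewrite (ordsum n (fun i => ((i < t) != ((i + 1) %% n < t) : nat))).
rewrite (ordsum n (fun i => ((i < t) != (i < a) : nat))).
rewrite (ordsum n (fun i => ((i < a) != ((i + k) %% n < a) : nat))).
rewrite sumA ?sumB ?sumC //; try lia.
Qed.

Definition rX n k (X : {set gp_vertex n}) := [rel a b | gp_adj n k a b && (a \in X) && (b \in X)].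

Lemma rX_sym n k X : symmetric (@rX n k X).
Proof. move=> a b /=; rewrite adj_sym; by case: (a \in X); case: (b \in X); rewrite ?andbF. Qed.

Lemma anchor n k (X : {set gp_vertex n}) x0 :
  (forall v, v \in X -> connect (rX k X) x0 v) -> induced_connected n k X.
Proof.
move=> h u v uX vX; change (connect (rX k X) u v).
apply: connect_trans (h v vX); rewrite (sym_connect_sym (@rX_sym n k X)); exact: h.
Qed.

Lemma step n k (X : {set gp_vertex n}) a b c :
  connect (rX k X) a b -> gp_adj n k b c -> b \in X -> c \in X -> connect (rX k X) a c.
Proof.
move=> h e bX cX; apply: connect_trans h (connect1 _); by rewrite /= e bX cX.
Qed.

Lemma Xta_conn n k t a : 0 < t -> t < n -> a <= t -> induced_connected n k (Xta n t a).
Proof.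
move=> ht htn hat.
have n0 : 0 < n by lia.
set x0 : gp_vertex n := (false, Ordinal n0).
have hx : forall m (i : 'I_n), val i = m -> m < t -> connect (rX k (Xta n t a)) x0 (false, i).
  elim=> [|m IH] i /= hi hm.
    by rewrite (_ : i = Ordinal n0) //; apply: val_inj.
  have hm' : m < n by lia.
  apply: (step (b := (false, Ordinal hm'))); first by apply: IH => //; lia.
  - by rewrite /gp_adj /= hi modn_small ?addn1 ?eqxx //; lia.
  - rewrite /Xta inE /=; lia.
  - rewrite /Xta inE /=; lia.
apply: (anchor (x0 := x0)) => -[[] i]; rewrite /Xta inE /= => hi.
  apply: (step (b := (false, i))); first by apply: (hx i) => //; lia.
  - by rewrite /gp_adj.
  - rewrite /Xta inE /=; lia.
  - by rewrite /Xta inE /=.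
exact: hx.
Qed.

Lemma Xtac_conn n k t a : 0 < k -> t + k <= n -> a <= t ->
  induced_connected n k (~: Xta n t a).
Proof.
move=> hk htn hat.
have n0 : n - 1 < n by lia.
set xl : gp_vertex n := (false, Ordinal n0).
set Y := ~: Xta n t a.
have hx : forall d (i : 'I_n), n - 1 - i = d -> t <= i -> connect (rX k Y) (false, i) xl.
  elim=> [|d IH] i /= hi hm.
    by rewrite (_ : i = Ordinal n0) //; apply: val_inj => /=; have := ltn_ord i; lia.
  have hm' : i.+1 < n by lia.
  rewrite (sym_connect_sym (@rX_sym n k Y)).
  apply: (step (b := (false, Ordinal hm'))).
  - rewrite (sym_connect_sym (@rX_sym n k Y)).
    apply: IH => /=; lia.
  - by rewrite /gp_adj /=; apply/orP; right; rewrite modn_small ?addn1 //.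
  - rewrite /Y /Xta !inE /=; lia.
  - rewrite /Y /Xta !inE /=; lia.
have hy : forall d (j : 'I_n), t - j <= d -> a <= j -> connect (rX k Y) (true, j) xl.
  elim=> [|d IH] j /= hd hj.
    apply: connect_trans (hx _ j erefl _); last by lia.
    by apply: connect1; rewrite /= /Y /Xta !inE /= eqxx /=; apply/andP; split; lia.
  case: (leqP t j) => htj.
    apply: connect_trans (hx _ j erefl htj).
    by apply: connect1; rewrite /= /Y /Xta !inE /= eqxx /=; apply/andP; split; lia.
  have hj' : j + k < n by lia.
  apply: connect_trans (IH (Ordinal hj') _ _); [|rewrite /=; lia|rewrite /=; lia].
  apply: connect1; rewrite /= /Y /Xta !inE /=; apply/andP; split; last by lia.
  apply/andP; split; last by lia.
  by rewrite /gp_adj /= modn_small ?eqxx.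
apply: (anchor (x0 := xl)) => -[[] i]; rewrite /Y /Xta !inE /= => hi.
  rewrite (sym_connect_sym (@rX_sym n k Y)).
  by apply: (hy (t - i)) => //; lia.
rewrite (sym_connect_sym (@rX_sym n k Y)).
by apply: (hx _ i erefl); lia.
Qed.


Theorem theorem1p6 (n k : nat) :
  3 <= n -> 1 <= k -> k.*2 < n ->
  forall s : nat, cospectrum n k s <-> 3 <= s <= n + 2.
Proof.
move=> h3 h1 h2 s; split.
- by case=> F [[X [hX hY cX cY ->]] <-]; apply: bond_sizes.
- move=> /andP [hs1 hs2].
  pose t := minn (s - 2) (n - k); pose a := s - 2 - t.
  have n0 : 0 < n by lia.
  have nl : n - 1 < n by lia.
  have ht : 0 < t by rewrite /t; lia.
  have htk : t + k <= n by rewrite /t; lia.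
  have ha : a <= k by rewrite /a /t; lia.
  have hat : a <= t by rewrite /a /t; lia.
  exists (edge_cut n k (Xta n t a)); split.
  + exists (Xta n t a); split => //.
    * by apply/set0Pn; exists (false, Ordinal n0); rewrite /Xta inE.
    * apply/set0Pn; exists (false, Ordinal nl); rewrite /Xta !inE /=; lia.
    * apply: Xta_conn => //; lia.
    * by apply: Xtac_conn.
  + rewrite Xta_cut //; rewrite /a /t; lia.
Qed.
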